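(* Let $\Omega$ be an infinite set and $A_i\subseteq\Omega$ for $i\in\mathbb{N}$. Define: $\mathcal{F}$ the set of nonempty finite subsets of $\mathbb{N}$, $\tilde{\mathcal{F}}:=\mathcal{F}\cup\{\emptyset\}$, and for $j\in\mathbb{Z}_+$, $\mathcal{F}_j$ the set of subsets of $\mathbb{N}$ of cardinality $j$; $B_\emptyset:=\Omega\setminus\bigcup_{i\in\mathbb{N}}A_i$; $B_\infty:=\limsup A_i=\bigcap_{i\in\mathbb{N}}\bigcup_{j\ge i}A_j$; for $U\in\mathcal{F}$, $A_U:=\bigcap_{i\in U}A_i$, $B_U:=A_U\setminus\bigcup_{i\in\mathbb{N}\setminus U}A_{U\cup\{i\}}$ (the points lying in $A_i$ exactly for $i\in U$), and $A'_U:=A_U\setminus B_\infty$. Then: (1) the sets $B_\infty$ and $B_U$, $U\in\tilde{\mathcal{F}}$, form a countable partition of $\Omega$; (2) $\bigcup_{i\in\mathbb{N}}A_i=B_\infty\cup\bigcup_{U\in\mathcal{F}}B_U$; (3) $A_U=A'_U\cup(A_U\cap B_\infty)$ for $U\in\mathcal{F}$. Assume in addition that $(\Omega,\Sigma,\Pr)$ is a probability space and $A_i\in\Sigma$ for all $i$, and let $S_k:=\sum_{1\le i_1<\cdots<i_k}\Pr(A_{i_1}\cap\cdots\cap A_{i_k})\in[0,\infty]$ for $k\in\mathbb{N}$ and $T_j:=\sum_{U\in\mathcal{F}_j}\Pr(B_U)$ for $j\in\mathbb{Z}_+$. Then: (4) if $S_k<\infty$ for some $k\in\mathbb{N}$,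 then $\Pr(B_\infty)=0$; (5) $\sum_{j\in\mathbb{Z}_+}T_j\le1$, with equality if and only if $\Pr(B_\infty)=0$; (6) if $\Pr(B_\infty)=0$, then $S_k=\sum_{j\in\mathbb{Z}_+}\binom{j+k}{k}T_{j+k}\in[0,\infty]$ for each $k\in\mathbb{N}$ (in the generalized sense: $S_k=\infty$ iff the series diverges); (7) if $S_l<\infty$ for some $l\in\mathbb{N}$, then $S_k<\infty$ for every positive integer $k<l$; and if furthermore $d,r\in\mathbb{Z}_+$ and $k\in\mathbb{N}$ satisfy $2d+k+1\in[1,l]$ and $2r+k\in[1,l]$, then $$\sum_{j=0}^{2d+1}(-1)^j\binom{j+k-1}{k-1}S_{j+k}\le\Pr\Big(\bigcup_{i_1<\cdots<i_k}(A_{i_1}\cap\cdots\cap A_{i_k})\Big)\le\sum_{j=0}^{2r}(-1)^j\binom{j+k-1}{k-1}S_{j+k}.$$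
   Context: $\mathbb{N}$ denotes the positive integers and $\mathbb{Z}_+$ the nonnegative integers; $\mathcal{F}_0=\{\emptyset\}$ and $B_\emptyset$ is as defined. *)

(* Defs.v *)
From HB Require Import structures.
From mathcomp Require Import all_boot all_order all_algebra.
From mathcomp Require Import finmap.
From mathcomp Require Import all_classical all_reals all_analysis.
Set Implicit Arguments. Unset Strict Implicit. Unset Printing Implicit Defensive.
Import Order.TTheory GRing.Theory Num.Theory.
Local Open Scope classical_set_scope.

(* Indices: the paper's ℕ = {1,2,...} is relabelled as nat = {0,1,2,...}
   (i |-> i-1); finite subsets of the index set are {fset nat}. *)

Section Defs.
Context {Omega : Type} (A : nat -> set Omega).

Definition Bempty : set Omega := ~` \bigcup_i A i.

Definition Binf : set Omega := \bigcap_i \bigcup_(j in [set j | (i <= j)%N]) A j.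

Definition AU (U : {fset nat}) : set Omega := \bigcap_(i in [set i | i \in U]) A i.

Definition BU (U : {fset nat}) : set Omega :=
  if U == fset0 then Bempty
  else AU U `\` \bigcup_(i in [set i | i \notin U]) AU (fsetU U [fset i]%fset).

Definition AU' (U : {fset nat}) : set Omega := AU U `\` Binf.

Definition Bfam (o : option {fset nat}) : set Omega :=
  match o with None => Binf | Some U => BU U end.
End Defs.

Section Prob.
Context {d : measure_display} {T : measurableType d} {R : realType}
  (P : probability T R) (A : nat -> set T).
Local Open Scope ereal_scope.

Definition Ssum (k : nat) : \bar R :=
  esum [set U : {fset nat} | #|` U| = k] (fun U => P (AU A U)).

Definition Tsum (j : nat) : \bar R :=
  esum [set U : {fset nat} | #|` U| = j] (fun U => P (BU A U)).
End Prob.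

(* Main.v *)
Require Import Defs.
From HB Require Import structures.
From mathcomp Require Import all_boot all_order all_algebra.
From mathcomp Require Import finmap.
From mathcomp Require Import all_classical all_reals all_analysis.
From mathcomp Require Import zify ring lra.
Import Order.TTheory GRing.Theory Num.Theory.

Module Aux.
Set Implicit Arguments. Unset Strict Implicit. Unset Printing Implicit Defensive.

Lemma hockey m j : \sum_(0 <= i < m) 'C(i, j) = 'C(m, j.+1).
Proof.
elim: m => [|m IH]; first by rewrite big_geq.
by rewrite big_nat_recr //= IH binS addnC.
Qed.

Lemma trinomial n a b : 'C(n, a) * 'C(n - a, b) = 'C(n, a + b) * 'C(a + b, a).
Proof.
have [abn|nab] := leqP (a + b) n; last first.
  rewrite (bin_small nab) mul0n.
  have [an|na] := leqP a n; last by rewrite (bin_small na).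
  by rewrite (@bin_small (n - a) b) ?muln0 //; lia.
have an : a <= n by lia.
have bna : b <= n - a by lia.
have F : 0 < a`! * b`! * (n - a - b)`! by rewrite !muln_gt0 !fact_gt0.
apply/eqP; rewrite -(eqn_pmul2r F); apply/eqP.
transitivity (n`!).
  rewrite -(bin_fact an) -(bin_fact bna).
  rewrite (_ : n - a - b = n - (a + b)) //; last by lia.
  by rewrite !mulnA; ring.
rewrite -(bin_fact abn) -(bin_fact (leq_addr b a)).
rewrite (_ : a + b - a = b); last by lia.
rewrite (_ : n - a - b = n - (a + b)); last by lia.
by rewrite !mulnA; ring.
Qed.

Section Bonf.
Variable k : nat.
Hypothesis k0 : 0 < k.
Definition bb j := 'C(j + k - 1, k - 1).
Definition GG m t := \sum_(0 <= i < m | k <= i) 'C(i, k - 1) * 'C(i - k, t).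
Definition ev m n := \sum_(0 <= j < n | ~~ odd j) bb j * 'C(m, j + k).
Definition od m n := \sum_(0 <= j < n | odd j) bb j * 'C(m, j + k).

Lemma GG_step m t : GG m t + GG m t.+1 = bb t.+1 * 'C(m, t.+1 + k).
Proof.
rewrite /GG -big_split /=.
rewrite (eq_bigr (fun i => 'C(t + k, k - 1) * 'C(i, t + k))); last first.
  move=> i ki; rewrite -mulnDr addnC -binS.
  have -> : (i - k).+1 = i - (k - 1) by lia.
  rewrite trinomial.
  have -> : k - 1 + t.+1 = t + k by lia.
  by rewrite mulnC.
rewrite -big_distrr /= /bb.
have -> : t.+1 + k - 1 = t + k by lia.
congr (_ * _).
rewrite (_ : t.+1 + k = (t + k).+1) ?addSn // -hockey [RHS](bigID (fun i => k <= i)) /=.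
rewrite [X in _ = _ + X]big1 ?addn0 //.
by move=> i; rewrite -ltnNge => ik; rewrite bin_small //; lia.
Qed.

Lemma GG_base m : 'C(m, k) = (k <= m) + GG m 0.
Proof.
elim: m => [|m IH].
  by rewrite /GG big_geq // addn0 bin0n; case: (k) k0.
rewrite /GG big_mkcond big_nat_recr //= -big_mkcond /= -/(GG m 0).
have -> : k = (k - 1).+1 by lia.
rewrite binS.
have -> : (k - 1).+1 = k by lia.
rewrite IH bin0 muln1.
have [km|km] := leqP k m.
  by rewrite (leq_trans km (leqnSn _)); lia.
have [e|ne] := eqVneq k m.+1.
  rewrite e leqnn (_ : m.+1 - 1 = m) ?binn; last by lia.
  by rewrite /= addn0 addnC.
rewrite bin_small; last by lia.
have -> : (k <= m.+1) = false by apply/negbTE; rewrite -ltnNge ltn_neqAle eq_sym ne /=.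
by rewrite /= !addn0.
Qed.

Lemma ev_rec m n : ev m n.+1 = ev m n + (~~ odd n) * (bb n * 'C(m, n + k)).
Proof. by rewrite /ev big_mkcond big_nat_recr //= -big_mkcond; case: odd; rewrite ?addn0 ?mul1n. Qed.
Lemma od_rec m n : od m n.+1 = od m n + (odd n) * (bb n * 'C(m, n + k)).
Proof. by rewrite /od big_mkcond big_nat_recr //= -big_mkcond; case: odd; rewrite ?addn0 ?mul1n. Qed.

Lemma bonf_main m t :
  if odd t then ev m t.+1 + GG m t = (k <= m) + od m t.+1
  else ev m t.+1 = (k <= m) + od m t.+1 + GG m t.
Proof.
elim: t => [|t IH].
  rewrite /= ev_rec od_rec /ev /od !big_geq //= /bb add0n.
  by rewrite (_ : k - 1 = k - 1) // binn mul1n GG_base; lia.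
rewrite ev_rec od_rec /=.
have S := GG_step m t.
case: (odd t) IH => /= IH; lia.
Qed.

Lemma bonf_upper m r : (k <= m) + od m (2 * r).+1 <= ev m (2 * r).+1.
Proof. have := bonf_main m (2 * r); rewrite oddM /= => ->; lia. Qed.

Lemma bonf_lower m d : ev m (2 * d + 1).+1 <= (k <= m) + od m (2 * d + 1).+1.
Proof.
have := bonf_main m (2 * d + 1).
by rewrite oddD oddM /= => <-; lia.
Qed.
End Bonf.

Lemma bin_le_mul m k l : k <= l -> 'C(m, k) <= 'C(l, k) * ('C(m, l) + 1).
Proof.
move=> kl; have [lm|ml] := leqP l m.
  have := trinomial m k (l - k).
  rewrite (_ : k + (l - k) = l); last by lia.
  move=> T.
  have P : 0 < 'C(m - k, l - k) by rewrite bin_gt0; lia.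
  apply: (@leq_trans ('C(m, k) * 'C(m - k, l - k))).
    by rewrite leq_pmulr.
  by rewrite T mulnC leq_mul2l leq_addr orbT.
apply: (@leq_trans ('C(l, k))); first by apply: leq_bin2l; lia.
by rewrite leq_pmulr // addn1.
Qed.


Local Open Scope classical_set_scope.

Section SetFacts.
Context {Omega : Type} (A : nat -> set Omega).

Lemma AUP U w : AU A U w <-> (forall i, i \in U -> A i w).
Proof. by split => [H i iU|H i iU]; apply: H. Qed.

Lemma BUP V w : BU A V w <-> (forall i, A i w <-> i \in V).
Proof.
rewrite /BU /Bempty; case: eqP => [->|V0].
  split => [H i|H].
    by rewrite inE; split => // Ai; case: H; exists i.
  by move=> [i _ Ai]; have := (H i).1 Ai; rewrite inE.
split => [[AV NU] i|H].
  split => [Ai|iV]; last exact: AV.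
  apply/negPn/negP => iV; apply: NU; exists i => // j.
  rewrite /= !inE => /orP[/AV//|/eqP ->//].
split => [i iV|]; first by apply/H.
move=> [i /= iV Ai]; move/negP: iV; apply; apply/H; apply: Ai.
by rewrite /= !inE eqxx orbT.
Qed.

Lemma BinfP w : Binf A w <-> (forall n, exists j, (n <= j)%N /\ A j w).
Proof.
split => [H n|H n _].
  by have [j /= nj Aj] := H n I; exists j.
by have [j [nj Aj]] := H n; exists j.
Qed.

Lemma notBinf w : ~ Binf A w -> exists n, forall j, (n <= j)%N -> ~ A j w.
Proof.
move=> nB.
case: (pselect (exists n, forall j, (n <= j)%N -> ~ A j w)) => // H.
exfalso; apply: nB; apply/BinfP => n.
case: (pselect (exists j, (n <= j)%N /\ A j w)) => // H2.
by exfalso; apply: H; exists n => j nj Aj; apply: H2; exists j.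
Qed.

Definition Vw w := fset_set [set i | A i w].

Lemma VwP w : ~ Binf A w -> BU A (Vw w) w.
Proof.
move=> /notBinf [n Hn].
have fin : finite_set [set i | A i w].
  apply: (@sub_finite_set _ _ `I_n); last exact: finite_II.
  move=> i Ai /=; rewrite ltnNge; apply/negP => ni; exact: Hn i ni Ai.
apply/BUP => i; rewrite in_fset_set // inE /=; split => // _.
Qed.

Lemma BU_Binf V w : BU A V w -> ~ Binf A w.
Proof.
move/BUP => H /BinfP /(_ (\max_(i <- V) i).+1) [j [jn Aj]].
have jV : j \in V := (H j).1 Aj.
have := @leq_bigmax_seq _ (enum_fset V) xpredT (fun i => i) j jV isT.
move: jn; rewrite /=; lia.
Qed.

Lemma BU_uniq U V w : BU A U w -> BU A V w -> U = V.
Proof.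
move=> /BUP HU /BUP HV; apply/fsetP => i.
apply/idP/idP => [/(HU i).2/(HV i).1|/(HV i).2/(HU i).1] //.
Qed.


Lemma cover_all : \bigcup_o Bfam A o = [set: Omega].
Proof.
apply/seteqP; split => // w _.
case: (pselect (Binf A w)) => H; first by exists None.
by exists (Some (Vw w)) => //=; apply: VwP.
Qed.

Lemma Bfam_triv : trivIset [set: option {fset nat}] (Bfam A).
Proof.
move=> [U|] [V|] _ _ [w [/= H1 H2]] //.
- by rewrite (BU_uniq H1 H2).
- by case: (BU_Binf H1 H2).
- by case: (BU_Binf H2 H1).
Qed.

Lemma part2 : \bigcup_i A i = Binf A `|` \bigcup_(U in [set U : {fset nat} | U != fset0]) BU A U.
Proof.
apply/seteqP; split => w.
  move=> [i _ Ai].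
  case: (pselect (Binf A w)) => H; first by left.
  right; exists (Vw w); last exact: VwP.
  have /BUP := VwP H => HV.
  by apply/fset0Pn; exists i; apply/HV.
move=> [/BinfP /(_ 0%N) [j [_ Aj]]|[U /= /fset0Pn [i iU] /BUP HU]]; first by exists j.
by exists i => //; apply/HU.
Qed.

Lemma part3 U : AU A U = AU' A U `|` (AU A U `&` Binf A).
Proof.
apply/seteqP; split => w; last by move=> [[]|[]].
move=> H; case: (pselect (Binf A w)) => B; [right|left] => //.
Qed.

End SetFacts.

Definition enc (U : {fset nat}) : nat := choice.pickle U.
Definition dec (n : nat) : {fset nat} := odflt fset0 (choice.unpickle n).
Lemma decK U : dec (enc U) = U. Proof. by rewrite /dec /enc choice.pickleK. Qed.

Section Esum.
Local Open Scope ereal_scope.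
Context {R : realType}.

Lemma esum_nat (Y : set {fset nat}) (f : {fset nat} -> \bar R) :
  (forall U, Y U -> 0 <= f U) ->
  esum Y f = \sum_(n <oo | n \in enc @` Y) f (dec n).
Proof.
move=> f0.
transitivity (esum Y (fun U => f (dec (enc U)))).
  by apply: eq_esum => U _; rewrite decK.
rewrite -(esum_image Y enc (fun n => f (dec n))); last first.
  by move=> x y _ _; apply: (pcan_inj (@choice.pickleK _)).
rewrite nneseries_esum ?set_mem_set //.
by move=> n; rewrite inE => -[U YU <-]; rewrite decK; exact: f0.
Qed.

Lemma esumZ (Y : set {fset nat}) (f : {fset nat} -> \bar R) (x : R) :
  (0 <= x)%R -> (forall U, Y U -> 0 <= f U) ->
  esum Y (fun U => x%:E * f U) = x%:E * esum Y f.
Proof.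
move=> x0 f0; rewrite !esum_nat //; last by move=> U YU; rewrite mule_ge0 ?f0.
rewrite nneseriesZl //.
by move=> n; rewrite inE => -[U YU <-]; rewrite decK; exact: f0.
Qed.

End Esum.

Section MeasEsum.
Local Open Scope ereal_scope.
Context {d : measure_display} {T : measurableType d} {R : realType}
  (mu : probability T R).

Lemma bigcup_fset_dec (Y : set {fset nat}) (E : {fset nat} -> set T) :
  \bigcup_(U in Y) E U = \bigcup_(n in enc @` Y) E (dec n).
Proof.
apply/seteqP; split => w.
  by move=> [U YU EU]; exists (enc U); [exists U|rewrite decK].
by move=> [n [U YU <-]]; rewrite decK => EU; exists U.
Qed.

Lemma bigcup_fset_measurable (Y : set {fset nat}) (E : {fset nat} -> set T) :
  (forall U, Y U -> measurable (E U)) -> measurable (\bigcup_(U in Y) E U).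
Proof.
move=> mE; rewrite bigcup_fset_dec; apply: bigcup_measurable.
by move=> n [U YU <-]; rewrite decK; exact: mE.
Qed.

Lemma measure_esum (Y : set {fset nat}) (E : {fset nat} -> set T) :
  (forall U, Y U -> measurable (E U)) -> trivIset Y E ->
  mu (\bigcup_(U in Y) E U) = esum Y (fun U => mu (E U)).
Proof.
move=> mE tE; rewrite bigcup_fset_dec measure_bigcup.
- by rewrite esum_nat.
- by move=> n [U YU <-]; rewrite decK; exact: mE.
- move=> n m [U YU <-] [V YV <-]; rewrite !decK => H.
  by rewrite (tE U V YU YV H).
Qed.

Lemma measure_esum_le (Y : set {fset nat}) (E : {fset nat} -> set T) :
  (forall U, Y U -> measurable (E U)) ->
  mu (\bigcup_(U in Y) E U) <= esum Y (fun U => mu (E U)).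
Proof.
move=> mE; rewrite esum_nat // bigcup_fset_dec.
pose F n := if n \in enc @` Y then E (dec n) else set0.
have mF n : measurable (F n).
  rewrite /F; case: ifPn => // /set_mem [U YU <-]; rewrite decK; exact: mE.
have -> : \bigcup_(n in enc @` Y) E (dec n) = \bigcup_n F n.
  apply/seteqP; split => w.
    by move=> [n Yn En]; exists n => //; rewrite /F ifT //; exact/mem_set.
  by move=> [n _]; rewrite /F; case: ifPn => // /set_mem Yn En; exists n.
apply: le_trans (measure_sigma_subadditive _ _ _ _) _.
- exact: mF.
- exact: bigcupT_measurable.
- by [].
rewrite [leRHS]eseries_mkcond; apply: lee_nneseries => [n _ _|n _] //.
by rewrite /F; case: (n \in enc @` Y); rewrite ?measure0.
Qed.

End MeasEsum.

Lemma sum_const_seq {R : realDomainType} (I : Type) (s : seq I) (c : \bar R) :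
  (\sum_(i <- s) c = (size s)%:R%:E * c)%E.
Proof.
elim: s => [|x s IH]; first by rewrite big_nil mul0e.
rewrite big_cons IH /= -nat1r EFinD ge0_muleDl ?mul1e //.
Qed.

Section Count.
Local Open Scope ereal_scope.
Context {R : realType}.

Lemma count_sub (V : {fset nat}) k (c : \bar R) : 0 <= c ->
  esum [set U : {fset nat} | #|`U| = k /\ (U `<=` V)%fset] (fun _ => c) =
  ('C(#|`V|, k))%:R%:E * c.
Proof.
move=> c0.
pose phi (S : {set V}) : {fset nat} := [fset val x | x in S]%fset.
have phiK S : fsub V (phi S) = S.
  by apply/setP => x; rewrite in_fsub /phi (mem_imfset _ _ val_inj).
have phiV S : (phi S `<=` V)%fset.
  by apply/fsubsetP => x /imfsetP [y _ ->]; exact: (valP y).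
have Xeq : [set U : {fset nat} | #|`U| = k /\ (U `<=` V)%fset] =
    phi @` [set S : {set V} | #|S| = k].
  apply/seteqP; split => U.
    move=> [cU UV]; exists (fsub V U); first by rewrite /= card_fsub.
    apply/fsetP => x; apply/imfsetP/idP => [[y]|xU].
      by rewrite in_fsub => yU ->.
    by exists [` (fsubsetP UV) x xU]%fset => //; rewrite in_fsub.
  by move=> [S /= cS <-]; split => //; rewrite -(card_fsub (phiV S)) phiK.
rewrite Xeq esum_image; last first.
  by move=> S1 S2 _ _ e; rewrite -(phiK S1) -(phiK S2) e.
rewrite esum_fset //; last exact: finite_finset.
pose B : {set {set V}} := finset (fun S : {set V} => #|S| == k).
have -> : [set S : {set V} | #|S| = k] = [set` enum B].
  apply/seteqP; split => S /=; rewrite mem_enum inE; first by move=> ->.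
  by move/eqP.
rewrite -fsbig_seq ?enum_uniq // sum_const_seq -cardE.
by rewrite card_draws cardfE.
Qed.

End Count.

Section Main.
Local Open Scope ereal_scope.
Context {d : measure_display} {T : measurableType d} {R : realType}
  (P : probability T R) (A : nat -> set T).
Hypothesis mA : forall i, measurable (A i).

Lemma mAU U : measurable (AU A U).
Proof. by apply: bigcap_measurableType => i _; exact: mA. Qed.

Lemma mBinf : measurable (Binf A).
Proof.
apply: bigcap_measurableType => i _; apply: bigcup_measurable => j _; exact: mA.
Qed.

Lemma mBU V : measurable (BU A V).
Proof.
rewrite /BU; case: ifP => _.
  by apply: measurableC; apply: bigcup_measurable => i _; exact: mA.
apply: measurableD; first exact: mAU.
by apply: bigcup_measurable => i _; exact: mAU.
Qed.

Lemma BU_triv (Y : set {fset nat}) : trivIset Y (BU A).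
Proof. by move=> U V _ _ [w [H1 H2]]; exact: BU_uniq H1 H2. Qed.

Lemma AU_decomp U : AU A U =
  (AU A U `&` Binf A) `|` \bigcup_(V in [set V | (U `<=` V)%fset]) BU A V.
Proof.
apply/seteqP; split => w.
  move=> H; case: (pselect (Binf A w)) => B; [left|right] => //.
  exists (Vw A w); last exact: VwP.
  have /BUP HV := VwP B.
  by apply/fsubsetP => i iU; apply/HV; apply: H.
move=> [[]//|[V /= UV /BUP HV]] i iU; apply/HV.
exact: (fsubsetP UV).
Qed.

Lemma P_AU U : P (AU A U) =
  P (AU A U `&` Binf A) + esum [set V | (U `<=` V)%fset] (fun V => P (BU A V)).
Proof.
rewrite {1}AU_decomp measureU.
- by congr (_ + _); apply: measure_esum; [move=> V _; exact: mBU|exact: BU_triv].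
- by apply: measurableI; [exact: mAU|exact: mBinf].
- by apply: bigcup_fset_measurable => V _; exact: mBU.
apply/seteqP; split => // w [[_ B] [V _ HV]].
exact: (BU_Binf HV B).
Qed.

Lemma BU_all : esum [set: {fset nat}] (fun V => P (BU A V)) = P (~` Binf A).
Proof.
rewrite -measure_esum; [|move=> V _; exact: mBU|exact: BU_triv].
congr (P _); apply/seteqP; split => w.
  by move=> [V _ HV]; exact: BU_Binf HV.
by move=> B; exists (Vw A w) => //; exact: VwP.
Qed.

Lemma group (g : nat -> R) : (forall m, (0 <= g m)%R) ->
  esum [set: {fset nat}] (fun V => (g #|`V|)%:E * P (BU A V)) =
  \sum_(m <oo) (g m)%:E * Tsum P A m.
Proof.
move=> g0.
have E : [set: {fset nat}] = \bigcup_(m in [set: nat]) [set V : {fset nat} | #|`V| = m].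
  by apply/seteqP; split => // V _; exists #|`V|.
rewrite E esum_bigcupT; last 2 first.
- by move=> m n _ _ [V [/= <- <-]].
- by move=> V; apply: mule_ge0; [rewrite lee_fin|exact: measure_ge0].
rewrite nneseries_esumT; last first.
  by move=> m; apply: mule_ge0; [rewrite lee_fin|apply: esum_ge0 => V _; exact: measure_ge0].
apply: eq_esum => m _.
transitivity (esum [set V : {fset nat} | #|`V| = m] (fun V => (g m)%:E * P (BU A V))).
  by apply: eq_esum => V /= ->.
by rewrite esumZ.
Qed.

Lemma S_BU k : P (Binf A) = 0 ->
  Ssum P A k = esum [set: {fset nat}] (fun V => ('C(#|`V|, k))%:R%:E * P (BU A V)).
Proof.
move=> B0; rewrite /Ssum.
transitivity (esum [set U : {fset nat} | #|`U| = k]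
   (fun U => esum [set V | (U `<=` V)%fset] (fun V => P (BU A V)))).
  apply: eq_esum => U _; rewrite P_AU.
  have -> : P (AU A U `&` Binf A) = 0.
    apply/eqP; rewrite eq_le measure_ge0 andbT -B0.
    by apply: measureIr; [exact: mAU|exact: mBinf].
  by rewrite add0e.
rewrite esum_esum; last by move=> *; exact: measure_ge0.
rewrite (reindex_esum ([set: {fset nat}] `*`` (fun V => [set U : {fset nat} | #|`U| = k /\ (U `<=` V)%fset]))
   _ (fun p => (p.2, p.1))); last first.
  split.
  - by move=> [V U] [_ /= [cU UV]].
  - by move=> [V1 U1] [V2 U2] _ _ /= [-> ->].
  - by move=> [U V] [/= cU UV]; exists (V, U).
rewrite /= -(esum_esum (I := [set: {fset nat}])
   (J := fun V => [set U : {fset nat} | #|`U| = k /\ (U `<=` V)%fset])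
   (a := fun V U => P (BU A V))); last by move=> *; exact: measure_ge0.
apply: eq_esum => V _.
by rewrite count_sub.
Qed.

Lemma Pfin (X : set T) : measurable X -> exists r : R, P X = r%:E /\ (0 <= r <= 1)%R.
Proof.
move=> mX; exists (fine (P X)).
have hf : P X \is a fin_num by rewrite fin_num_measure.
rewrite fineK //; split => //.
by rewrite -!lee_fin fineK // measure_ge0 probability_le1.
Qed.

Lemma sumT : \sum_(0 <= j <oo) Tsum P A j = 1 - P (Binf A).
Proof.
rewrite -probability_setC; last exact: mBinf.
rewrite -BU_all.
have := group (g := fun _ => 1%R) (fun _ => ler01).
under eq_esum do rewrite mul1e.
by under eq_eseriesr do rewrite mul1e.
Qed.

Lemma part5 : \sum_(0 <= j <oo) Tsum P A j <= 1 /\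
      (\sum_(0 <= j <oo) Tsum P A j = 1 <-> P (Binf A) = 0).
Proof.
rewrite sumT; have [r [-> /andP[r0 r1]]] := Pfin mBinf.
rewrite -EFinB lee_fin; split; first by rewrite lerBlDr lerDl.
split => [[]|[->]]; last by rewrite subr0.
by move/eqP; rewrite subr_eq addrC -subr_eq subrr eq_sym => /eqP ->.
Qed.

Lemma bigU_exists w M k : Binf A w -> exists U : {fset nat},
  #|`U| = k /\ (forall i, i \in U -> (M <= i)%N) /\ (forall i, i \in U -> A i w).
Proof.
move=> /BinfP B; elim: k => [|k [U [cU [UM UA]]]].
  by exists fset0; rewrite cardfs0; split => //; split => i; rewrite inE.
have [j [jn Aj]] := B (maxn M (\max_(i <- U) i).+1).
have jU : j \notin U.
  apply/negP => jU.
  have := @leq_bigmax_seq _ (enum_fset U) xpredT (fun i => i) j jU isT.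
  move: jn; rewrite geq_max => /andP[_]; rewrite /=; lia.
exists (j |` U)%fset; split; first by rewrite cardfsU1 jU cU.
split => i; rewrite !inE => /orP[/eqP ->|iU].
- by move: jn; rewrite geq_max => /andP[].
- exact: UM.
- exact: Aj.
- exact: UA.
Qed.

Lemma part4 k : (0 < k)%N -> Ssum P A k < +oo -> P (Binf A) = 0.
Proof.
move=> k0 Sfin.
pose X := [set U : {fset nat} | #|`U| = k].
have s0 : 0 <= Ssum P A k by apply: esum_ge0 => U _; exact: measure_ge0.
have key : forall F, fsets X F -> \sum_(U \in F) P (AU A U) + P (Binf A) <= Ssum P A k.
  move=> F [finF FX].
  rewrite /Ssum -/X (esumID F); last by move=> *; exact: measure_ge0.
  apply: leeD.
    rewrite esum_fset; first last.
    - by move=> *; exact: measure_ge0.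
    - exact: finite_setIr.
    rewrite (_ : X `&` F = F) //; apply/seteqP; split => U; first by case.
    by move=> FU; split => //; exact: FX.
  apply: le_trans (measure_esum_le _ _) => //; last by move=> U _; exact: mAU.
  rewrite le_measure ?inE //; first exact: mBinf.
    by apply: bigcup_fset_measurable => U _; exact: mAU.
  pose M := (\max_(U <- fset_set F) \max_(i <- U) i).+1.
  move=> w Bw; have [U [cU [UM UA]]] := bigU_exists M k Bw.
  exists U => //; split => //= FU.
  have : U != fset0 by rewrite -cardfs_gt0 cU.
  case/fset0Pn => i iU.
  have h1 := @leq_bigmax_seq _ (enum_fset U) xpredT (fun i => i) i iU isT.
  have UF : U \in fset_set F by rewrite in_fset_set // inE.
  have h2 := @leq_bigmax_seq _ (enum_fset (fset_set F)) xpredT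
    (fun U : {fset nat} => \max_(i <- U) i) U UF isT.
  have := UM i iU; rewrite /M /= => H.
  by move: (leq_ltn_trans (leq_trans h1 h2) H); rewrite ltnn.
have [p [pE /andP[p0 p1]]] := Pfin mBinf.
have sfin : Ssum P A k \is a fin_num by rewrite ge0_fin_numE.
have [s sE] : exists s : R, Ssum P A k = s%:E by exists (fine (Ssum P A k)); rewrite fineK.
have : Ssum P A k <= Ssum P A k - P (Binf A).
  rewrite {1}/Ssum /esum; apply: ge_ereal_sup => _ [F HF <-].
  by rewrite leeBrDr ?key // pE.
rewrite sE pE -EFinB lee_fin => H.
by apply/eqP; rewrite eqe; apply/eqP; lra.
Qed.

Lemma SeriesS k : P (Binf A) = 0 ->
  Ssum P A k = \sum_(m <oo) ('C(m, k))%:R%:E * Tsum P A m.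
Proof.
move=> B0; rewrite S_BU //.
by rewrite (group (g := fun m => (('C(m, k))%:R)%R)) // => m; exact: ler0n.
Qed.

Lemma Tsum_ge0 m : 0 <= Tsum P A m.
Proof. by apply: esum_ge0 => U _; exact: measure_ge0. Qed.

Lemma part6 : P (Binf A) = 0 -> forall k, (0 < k)%N ->
  Ssum P A k = \sum_(0 <= j <oo) (('C(j + k, k))%:R)%:E * Tsum P A (j + k).
Proof.
move=> B0 k k0; rewrite SeriesS //.
rewrite (nneseries_addn (f := fun m => ('C(m, k))%:R%:E * Tsum P A m)); last first.
  by move=> m; rewrite mule_ge0 ?lee_fin ?ler0n ?Tsum_ge0.
rewrite (nneseries_split 0 k); last first.
  by move=> m _; rewrite mule_ge0 ?lee_fin ?ler0n ?Tsum_ge0.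
rewrite big_nat_cond big1 ?add0e // => i /andP[/andP[_ ik] _].
by rewrite bin_small ?mul0e //; move: ik; rewrite add0n.
Qed.

Lemma sub_card (V : {fset nat}) k : (k <= #|`V|)%N ->
  exists U : {fset nat}, #|`U| = k /\ (U `<=` V)%fset.
Proof.
elim: k => [|k IH] kV; first by exists fset0; rewrite cardfs0 fsub0set.
have [U [cU UV]] := IH (ltnW kV).
have : ~~ (V `<=` U)%fset.
  apply/negP => /fsubset_leq_card; rewrite cU; lia.
case/fsubsetPn => x xV xU.
exists (x |` U)%fset; split; first by rewrite cardfsU1 xU cU.
by apply/fsubsetP => y; rewrite !inE => /orP[/eqP ->//|/(fsubsetP UV)].
Qed.

Lemma P_union k : P (Binf A) = 0 ->
  P (\bigcup_(U in [set U : {fset nat} | #|` U| = k]) AU A U) =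
  \sum_(m <oo) (((k <= m)%N)%:R)%:E * Tsum P A m.
Proof.
move=> B0.
pose W := \bigcup_(V in [set V : {fset nat} | (k <= #|`V|)%N]) BU A V.
have mW : measurable W by apply: bigcup_fset_measurable => V _; exact: mBU.
have mE : measurable (\bigcup_(U in [set U : {fset nat} | #|` U| = k]) AU A U).
  by apply: bigcup_fset_measurable => V _; exact: mAU.
have -> : P (\bigcup_(U in [set U : {fset nat} | #|` U| = k]) AU A U) = P W.
  apply/eqP; rewrite eq_le; apply/andP; split.
    apply: le_trans (_ : P (W `|` Binf A) <= _).
      rewrite le_measure ?inE //; first exact: measurableU mW mBinf.
      move=> w [U /= cU HU]; case: (pselect (Binf A w)) => B; [right|left] => //.
      exists (Vw A w); last exact: VwP.
      have /BUP HV := VwP B.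
      rewrite /= -cU; apply: fsubset_leq_card; apply/fsubsetP => i iU.
      by apply/HV; apply: HU.
    have U2 : P (W `|` Binf A) <= P W + P (Binf A) := measureU2 _ mW mBinf.
    by rewrite B0 adde0 in U2.
  rewrite le_measure ?inE //.
  move=> w [V /= kV /BUP HV].
  have [U [cU UV]] := sub_card kV.
  exists U => // i iU; apply/HV; exact: (fsubsetP UV).
rewrite /W measure_esum; last 2 first.
- by move=> V _; exact: mBU.
- exact: BU_triv.
rewrite -(group (g := fun m => (((k <= m)%N)%:R)%R)) // esum_mkcond.
apply: eq_esum => V _; case: (leqP k #|`V|) => h.
  by rewrite ifT /= ?mul1e //; exact: mem_set.
rewrite ifF /= ?mul0e //; apply/negbTE; apply/negP => /set_mem /=; by rewrite leqNgt h.
Qed.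

Lemma part7a l : (0 < l)%N -> Ssum P A l < +oo ->
  forall k, (0 < k)%N -> (k < l)%N -> Ssum P A k < +oo.
Proof.
move=> l0 Sl k k0 kl.
have B0 := part4 l0 Sl.
rewrite SeriesS //.
apply: (@le_lt_trans _ _ (('C(l, k))%:R%:E * (Ssum P A l + (1 - P (Binf A))))).
  rewrite SeriesS // -sumT -nneseriesD; first last.
  - by move=> m _ _; exact: Tsum_ge0.
  - by move=> m _ _; rewrite mule_ge0 ?lee_fin ?ler0n ?Tsum_ge0.
  rewrite -nneseriesZl; last first.
    by move=> m _; rewrite adde_ge0 ?mule_ge0 ?lee_fin ?ler0n ?Tsum_ge0.
  apply: lee_nneseries => [m _ _|m _]; first by rewrite mule_ge0 ?lee_fin ?ler0n ?Tsum_ge0.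
  rewrite -[X in _ <= _ * (_ + X)]mul1e -ge0_muleDl ?lee_fin ?ler0n // muleA.
  apply: lee_wpmul2r; first exact: Tsum_ge0.
  by rewrite -EFinD -EFinM lee_fin natr1 -natrM ler_nat -addn1 bin_le_mul // ltnW.
have Slf : Ssum P A l \is a fin_num.
  by rewrite ge0_fin_numE // esum_ge0 // => U _; exact: measure_ge0.
have [p [pE _]] := Pfin mBinf.
rewrite pE -EFinB.
have F : ((('C(l, k))%:R)%:E * (Ssum P A l + (1 - p)%:E)) \is a fin_num by rewrite fin_numM // fin_numD Slf.
by case/fin_numPlt/andP: F.
Qed.

Lemma combo (Q : pred nat) n k : P (Binf A) = 0 ->
  \sum_(0 <= j < n | Q j) ((bb k j)%:R)%:E * Ssum P A (j + k) =
  \sum_(m <oo) ((\sum_(0 <= j < n | Q j) bb k j * 'C(m, j + k))%:R)%:E * Tsum P A m.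
Proof.
move=> B0.
transitivity (\sum_(0 <= j < n | Q j) \sum_(m <oo)
    ((bb k j)%:R)%:E * ((('C(m, j + k))%:R)%:E * Tsum P A m)).
  apply: eq_bigr => j _; rewrite SeriesS // -nneseriesZl //.
  by move=> m _; rewrite mule_ge0 ?lee_fin ?ler0n ?Tsum_ge0.
rewrite -nneseries_sum; last first.
  by move=> j m _; rewrite !mule_ge0 ?lee_fin ?ler0n ?Tsum_ge0.
apply: eq_eseriesr => m _.
rewrite natr_sum -sumEFin ge0_sume_distrl; last by move=> j _; rewrite lee_fin ler0n.
by apply: eq_bigr => j _; rewrite muleA -EFinM natrM.
Qed.

Lemma signed n k : (forall j, (j < n)%N -> Ssum P A (j + k) \is a fin_num) ->
  \sum_(0 <= j < n) (((-1) ^+ j * ('C(j + k - 1, k - 1))%:R)%:E * Ssum P A (j + k)) =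
  \sum_(0 <= j < n | ~~ odd j) ((bb k j)%:R)%:E * Ssum P A (j + k) -
  \sum_(0 <= j < n | odd j) ((bb k j)%:R)%:E * Ssum P A (j + k).
Proof.
move=> fin.
rewrite (bigID (fun j => odd j)) /= addeC; congr (_ + _).
  apply: eq_bigr => j oj; rewrite -signr_odd (negbTE oj) expr0 mul1r //.
rewrite big_nat_cond [in RHS]big_nat_cond -fin_num_sumeN; last first.
  move=> j /andP[/andP[_ jn] _]; rewrite fin_numM //; exact: fin.
apply: eq_bigr => j /andP[_ oj].
by rewrite -signr_odd oj expr1 mulN1r EFinN mulNe.
Qed.

Lemma odd_fin n k (Q : pred nat) : (forall j, (j < n)%N -> Ssum P A (j + k) \is a fin_num) ->
  \sum_(0 <= j < n | Q j) ((bb k j)%:R)%:E * Ssum P A (j + k) \is a fin_num.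
Proof.
move=> fin; apply/sum_fin_numP => j; rewrite mem_index_iota => /andP[_ jn] _.
by rewrite fin_numM // fin.
Qed.

Lemma bonf_up k r : (0 < k)%N -> P (Binf A) = 0 ->
  (forall j, (j < (2 * r).+1)%N -> Ssum P A (j + k) \is a fin_num) ->
  P (\bigcup_(U in [set U : {fset nat} | #|` U| = k]) AU A U) <=
  \sum_(0 <= j < (2 * r).+1) (((-1) ^+ j * ('C(j + k - 1, k - 1))%:R)%:E * Ssum P A (j + k)).
Proof.
move=> k0 B0 fin; rewrite signed // leeBrDr; last exact: odd_fin.
rewrite P_union // !combo // -nneseriesD; first last.
- by move=> m _ _; rewrite mule_ge0 ?lee_fin ?ler0n ?Tsum_ge0.
- by move=> m _ _; rewrite mule_ge0 ?lee_fin ?ler0n ?Tsum_ge0.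
apply: lee_nneseries => [m _ _|m _].
  by rewrite adde_ge0 // mule_ge0 ?lee_fin ?ler0n ?Tsum_ge0.
rewrite -ge0_muleDl ?lee_fin ?ler0n //; apply: lee_wpmul2r; first exact: Tsum_ge0.
by rewrite -EFinD lee_fin -natrD ler_nat; exact: bonf_upper.
Qed.

Lemma bonf_low k dd : (0 < k)%N -> P (Binf A) = 0 ->
  (forall j, (j < (2 * dd + 1).+1)%N -> Ssum P A (j + k) \is a fin_num) ->
  \sum_(0 <= j < (2 * dd + 1).+1) (((-1) ^+ j * ('C(j + k - 1, k - 1))%:R)%:E * Ssum P A (j + k))
  <= P (\bigcup_(U in [set U : {fset nat} | #|` U| = k]) AU A U).
Proof.
move=> k0 B0 fin; rewrite signed // leeBlDr; last exact: odd_fin.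
rewrite P_union // !combo // -nneseriesD; first last.
- by move=> m _ _; rewrite mule_ge0 ?lee_fin ?ler0n ?Tsum_ge0.
- by move=> m _ _; rewrite mule_ge0 ?lee_fin ?ler0n ?Tsum_ge0.
apply: lee_nneseries => [m _ _|m _].
  by rewrite mule_ge0 ?lee_fin ?ler0n ?Tsum_ge0.
rewrite -ge0_muleDl ?lee_fin ?ler0n //; apply: lee_wpmul2r; first exact: Tsum_ge0.
by rewrite -EFinD lee_fin -natrD ler_nat; exact: bonf_lower.
Qed.

End Main.

End Aux.

Local Open Scope classical_set_scope.
Local Open Scope ereal_scope.

Theorem proposition3p2 :
  (forall (Omega : Type) (A : nat -> set Omega),
     infinite_set [set: Omega] ->
     (* (1) *)
     (countable [set: option {fset nat}] /\
      trivIset [set: option {fset nat}] (Bfam A) /\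
      \bigcup_o Bfam A o = [set: Omega]) /\
     (* (2) *)
     (\bigcup_i A i = Binf A `|` \bigcup_(U in [set U : {fset nat} | U != fset0]) BU A U) /\
     (* (3) *)
     (forall U : {fset nat}, U != fset0 -> AU A U = AU' A U `|` (AU A U `&` Binf A)))
  /\
  (forall (d : measure_display) (T : measurableType d) (R : realType)
          (P : probability T R) (A : nat -> set T),
     infinite_set [set: T] ->
     (forall i, measurable (A i)) ->
     (* (4) *)
     ((exists k, (0 < k)%N /\ Ssum P A k < +oo) -> P (Binf A) = 0) /\
     (* (5) *)
     (\sum_(0 <= j <oo) Tsum P A j <= 1 /\
      (\sum_(0 <= j <oo) Tsum P A j = 1 <-> P (Binf A) = 0)) /\
     (* (6) *)
     (P (Binf A) = 0 -> forall k, (0 < k)%N ->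
        Ssum P A k = \sum_(0 <= j <oo) (('C(j + k, k))%:R)%:E * Tsum P A (j + k)) /\
     (* (7) *)
     (forall l, (0 < l)%N -> Ssum P A l < +oo ->
        (forall k, (0 < k)%N -> (k < l)%N -> Ssum P A k < +oo) /\
        (forall (dd r k : nat), (0 < k)%N ->
           (1 <= 2 * dd + k + 1 <= l)%N -> (1 <= 2 * r + k <= l)%N ->
           \sum_(0 <= j < (2 * dd + 1).+1)
               (((-1) ^+ j * ('C(j + k - 1, k - 1))%:R)%:E * Ssum P A (j + k))
             <= P (\bigcup_(U in [set U : {fset nat} | #|` U| = k]) AU A U)
           /\
           P (\bigcup_(U in [set U : {fset nat} | #|` U| = k]) AU A U)
             <= \sum_(0 <= j < (2 * r).+1)
               (((-1) ^+ j * ('C(j + k - 1, k - 1))%:R)%:E * Ssum P A (j + k))))).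

Proof.
split.
  move=> Omega A _; split.
    split; first exact: countableP.
    by split; [exact: Aux.Bfam_triv|exact: Aux.cover_all].
  by split; [exact: Aux.part2|move=> U _; exact: Aux.part3].
move=> d T R P A _ mA.
have p4 : (exists k, (0 < k)%N /\ Ssum P A k < +oo) -> P (Binf A) = 0.
  by move=> [k [k0 Sk]]; exact: (Aux.part4 mA k0 Sk).
split => //; split; first exact: (Aux.part5 P mA).
split; first exact: (Aux.part6 mA).
move=> l l0 Sl; split; first exact: (Aux.part7a mA l0 Sl).
move=> dd r k k0 /andP[_ h1] /andP[_ h2].
have B0 := Aux.part4 mA l0 Sl.
have finS : forall j, (j + k <= l)%N -> Ssum P A (j + k) \is a fin_num.
  move=> j jl; rewrite ge0_fin_numE; last first.
    by apply: esum_ge0 => U _; exact: measure_ge0.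
  case: (ltngtP (j + k) l) => [lt|gt|->] //.
  - apply: (Aux.part7a mA l0 Sl) => //; lia.
  - by move: jl; rewrite leqNgt gt.
split.
- by apply: (Aux.bonf_low mA) => // j jn; apply: finS; lia.
- by apply: (Aux.bonf_up mA) => // j jn; apply: finS; lia.
Qed.
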